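(* Along every trajectory of the Physarum dynamics, the potential difference $\Delta(t)=p_{s_0}(t)-p_{s_1}(t)$ converges to $L^*$, the length of a shortest $s_0$-$s_1$ path in $G$.
   Context: Let $G=(N,E)$ be a finite connected undirected graph with two distinct vertices $s_0$ (source) and $s_1$ (sink). Each edge $e$ has a fixed length $L_e>0$. Each edge has a time-dependent diameter $D_e(t)$ with $D_e(0)>0$, and resistance $R_e=L_e/D_e$. At each time $t$, the vertex potentials $p_v$ (normalized by $p_{s_1}=0$) are the solution of $\sum_{u\in\delta(v)}(p_v-p_u)/R_{uv}=b_v$ for all $v$, where $\delta(v)$ is the set of neighbours of $v$, $b_{s_0}=1$, $b_{s_1}=-1$, $b_v=0$ otherwise; for an edge $e=\{u,v\}$ with an arbitrarily fixed orientation $(u,v)$ the current is $Q_e=(p_u-p_v)/R_e=D_e(p_u-p_v)/L_e$. The diameters evolve by $\dot D_e(t)=|Q_e(t)|-D_e(t)$ for all $e\in E$ (the ''Physarum dynamics''). The length of a path is the sum of $L_e$ over its edges. *)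

(* Defs.v *)
From Stdlib Require Import Reals Lra List.
Import ListNotations.
Open Scope R_scope.

(* Graph encoding: vertices are 0..n-1; edges are 0..m-1; edge e joins
   vertices tl e and hd e (tl e is the arbitrarily fixed orientation). *)

Fixpoint rsum (m : nat) (f : nat -> R) : R :=
  match m with
  | O => 0
  | S k => rsum k f + f k
  end.

Inductive walk (m : nat) (tl hd : nat -> nat) : list nat -> list nat -> Prop :=
| walk_one v : walk m tl hd [v] []
| walk_step u v vs e es :
    (e < m)%nat ->
    ((tl e = u /\ hd e = v) \/ (tl e = v /\ hd e = u)) ->
    walk m tl hd (v :: vs) es ->
    walk m tl hd (u :: v :: vs) (e :: es).

Definition is_path (m : nat) (tl hd : nat -> nat) (s t : nat)
    (vs es : list nat) : Prop :=
  walk m tl hd vs es /\ NoDup vs /\ hd_error vs = Some s /\ last vs s = t.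

Definition path_length (L : nat -> R) (es : list nat) : R :=
  fold_right (fun e acc => L e + acc) 0 es.

Definition shortest_path_length (m : nat) (tl hd : nat -> nat) (L : nat -> R)
    (s t : nat) (Lstar : R) : Prop :=
  (exists vs es, is_path m tl hd s t vs es /\ path_length L es = Lstar) /\
  (forall vs es, is_path m tl hd s t vs es -> Lstar <= path_length L es).

Definition connected_simple_graph (n m : nat) (tl hd : nat -> nat)
    (s0 s1 : nat) : Prop :=
  (s0 < n)%nat /\ (s1 < n)%nat /\ s0 <> s1 /\
  (forall e, (e < m)%nat -> (tl e < n)%nat /\ (hd e < n)%nat /\ tl e <> hd e) /\
  (forall e e', (e < m)%nat -> (e' < m)%nat -> e <> e' ->
     ~ ((tl e = tl e' /\ hd e = hd e') \/ (tl e = hd e' /\ hd e = tl e'))) /\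
  (forall v, (v < n)%nat -> exists vs es, walk m tl hd vs es /\
       hd_error vs = Some s0 /\ last vs s0 = v).

Definition supply (s0 s1 v : nat) : R :=
  if Nat.eqb v s0 then 1 else if Nat.eqb v s1 then -1 else 0.

Definition net_outflow (m : nat) (tl hd : nat -> nat) (L D : nat -> R)
    (p : nat -> R) (v : nat) : R :=
  rsum m (fun e =>
    if Nat.eqb (tl e) v then (p v - p (hd e)) / (L e / D e)
    else if Nat.eqb (hd e) v then (p v - p (tl e)) / (L e / D e)
    else 0).

Definition current (tl hd : nat -> nat) (L D : nat -> R) (p : nat -> R)
    (e : nat) : R :=
  (p (tl e) - p (hd e)) / (L e / D e).

(* Main.v *)
Require Import Defs.
From Stdlib Require Import Reals List.
From Stdlib Require Import Lra Lia Arith Classical.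
Import ListNotations.
Open Scope R_scope.

Lemma exp_le_mono x y : x <= y -> exp x <= exp y.
Proof. intros [H|H]; [left; apply exp_increasing; auto | subst; lra]. Qed.

Lemma ln_le_mono x y : 0 < x -> x <= y -> ln x <= ln y.
Proof. intros Hx [H|H]; [left; apply ln_increasing; auto | subst; lra]. Qed.

Lemma dpl_plus f g x a b : derivable_pt_lim f x a -> derivable_pt_lim g x b ->
  derivable_pt_lim (fun y => f y + g y) x (a + b).
Proof. intros; exact (derivable_pt_lim_plus f g x a b H H0). Qed.

Lemma dpl_minus f g x a b : derivable_pt_lim f x a -> derivable_pt_lim g x b ->
  derivable_pt_lim (fun y => f y - g y) x (a - b).
Proof. intros; exact (derivable_pt_lim_minus f g x a b H H0). Qed.

Lemma dpl_mult f g x a b : derivable_pt_lim f x a -> derivable_pt_lim g x b ->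
  derivable_pt_lim (fun y => f y * g y) x (a * g x + f x * b).
Proof. intros; exact (derivable_pt_lim_mult f g x a b H H0). Qed.

Lemma dpl_const c x : derivable_pt_lim (fun _ => c) x 0.
Proof. exact (derivable_pt_lim_const c x). Qed.

Lemma dpl_id x : derivable_pt_lim (fun y => y) x 1.
Proof. exact (derivable_pt_lim_id x). Qed.

Lemma dpl_scal c f x a : derivable_pt_lim f x a ->
  derivable_pt_lim (fun y => c * f y) x (c * a).
Proof. intros; exact (derivable_pt_lim_scal f c x a H). Qed.

Lemma dpl_exp f x a : derivable_pt_lim f x a ->
  derivable_pt_lim (fun y => exp (f y)) x (exp (f x) * a).
Proof. intros H. exact (derivable_pt_lim_comp f exp x a (exp (f x)) H (derivable_pt_lim_exp _)). Qed.

Lemma dpl_ln f x a : derivable_pt_lim f x a -> 0 < f x ->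
  derivable_pt_lim (fun y => ln (f y)) x (/ f x * a).
Proof. intros H Hp. exact (derivable_pt_lim_comp f ln x a (/ f x) H (derivable_pt_lim_ln _ Hp)). Qed.


Lemma mono_deriv f f' a b : a <= b ->
  (forall c, a <= c <= b -> derivable_pt_lim f c (f' c)) ->
  (forall c, a <= c <= b -> 0 <= f' c) -> f a <= f b.
Proof.
  intros [Hab|Hab] Hd Hp; [|subst; lra].
  destruct (MVT_cor2 f f' a b Hab Hd) as [c [Hc1 Hc2]].
  assert (0 <= f' c) by (apply Hp; lra).
  assert (0 <= f' c * (b - a)) by (apply Rmult_le_pos; lra). lra.
Qed.

Lemma lin_upper f f' k B a b : 0 < k -> a <= b ->
  (forall c, a <= c <= b -> derivable_pt_lim f c (f' c)) ->
  (forall c, a <= c <= b -> f' c <= k * (B - f c)) ->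
  f b - B <= exp (- (k * (b - a))) * (f a - B).
Proof.
  intros Hk Hab Hd Hi.
  set (g := fun s => - (exp (k * s) * (f s - B))).
  assert (Hg : g a <= g b).
  { apply (mono_deriv g (fun s => - (exp (k*s) * (k*1) * (f s - B) + exp (k*s) * (f' s - 0)))); auto.
    - intros c Hc. unfold g. apply derivable_pt_lim_opp with (f := fun s => exp (k * s) * (f s - B)).
      apply (dpl_mult (fun s => exp (k*s)) (fun s => f s - B)).
      + apply dpl_exp. apply dpl_scal. apply dpl_id.
      + apply dpl_minus; [apply Hd; auto | apply dpl_const].
    - intros c Hc. specialize (Hi c Hc). pose proof (exp_pos (k*c)).
      assert (0 <= exp (k*c) * (- (k * (f c - B) + f' c))) by (apply Rmult_le_pos; lra).
      lra. }
  unfold g in Hg.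
  assert (E: exp (k * b) * (f b - B) <= exp (k * a) * (f a - B)) by lra.
  pose proof (exp_pos (- (k * b))).
  apply Rmult_le_compat_l with (r := exp (- (k * b))) in E; [|lra].
  rewrite <- Rmult_assoc, <- exp_plus, <- Rmult_assoc, <- exp_plus in E.
  replace (- (k * b) + k * b) with 0 in E by ring. rewrite exp_0 in E.
  replace (- (k * b) + k * a) with (- (k * (b - a))) in E by ring. lra.
Qed.

Lemma lin_lower f f' k B a b : 0 < k -> a <= b ->
  (forall c, a <= c <= b -> derivable_pt_lim f c (f' c)) ->
  (forall c, a <= c <= b -> k * (B - f c) <= f' c) ->
  exp (- (k * (b - a))) * (f a - B) <= f b - B.
Proof.
  intros Hk Hab Hd Hi.
  pose proof (lin_upper (fun s => - f s) (fun s => - f' s) k (- B) a b Hk Hab) as H.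
  assert (H2 : - f b - - B <= exp (- (k * (b - a))) * (- f a - - B)).
  { apply H.
    - intros c Hc. apply derivable_pt_lim_opp with (f := f). auto.
    - intros c Hc. specialize (Hi c Hc). lra. }
  lra.
Qed.

Lemma small_exp c : 0 < c -> exists T, forall t, T <= t -> exp (- t) <= c.
Proof.
  intros Hc. exists (- ln c). intros t Ht.
  rewrite <- (exp_ln c Hc). apply exp_le_mono. lra.
Qed.

Lemma mono_bounded_cauchy (g : R -> R) a C :
  (forall s t, a <= s -> s <= t -> g s <= g t) -> (forall t, a <= t -> g t <= C) ->
  forall eta, 0 < eta -> exists T, a <= T /\ forall s t, T <= s -> s <= t -> g t - g s < eta.
Proof.
  intros Hm Hb eta Heta.
  set (E := fun y => exists t, a <= t /\ y = g t).
  assert (HE : bound E) by (exists C; intros y [t [Ht ->]]; auto).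
  assert (HE2 : exists y, E y) by (exists (g a); exists a; split; [lra|auto]).
  destruct (completeness E HE HE2) as [S [Hub Hmin]].
  assert (exists t, a <= t /\ S - eta < g t).
  { apply NNPP. intros Hno. assert (S <= S - eta); [|lra].
    apply Hmin. intros y [t [Ht ->]].
    destruct (Rle_dec (g t) (S - eta)) as [?|Hn]; auto.
    exfalso. apply Hno. exists t. split; auto. lra. }
  destruct H as [T [HT HgT]]. exists T. split; auto.
  intros s t Hs Hst.
  assert (g t <= S) by (apply Hub; exists t; split; lra).
  assert (g T <= g s) by (apply Hm; lra). lra.
Qed.


Lemma rsum_ext m f g : (forall e, (e < m)%nat -> f e = g e) -> rsum m f = rsum m g.
Proof. induction m; simpl; intros H; auto. rewrite IHm, H; auto. Qed.

Lemma rsum_plus m f g : rsum m (fun e => f e + g e) = rsum m f + rsum m g.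
Proof. induction m; simpl; [ring|rewrite IHm; ring]. Qed.

Lemma rsum_minus m f g : rsum m (fun e => f e - g e) = rsum m f - rsum m g.
Proof. induction m; simpl; [ring|rewrite IHm; ring]. Qed.

Lemma rsum_scal m c f : rsum m (fun e => c * f e) = c * rsum m f.
Proof. induction m; simpl; [ring|rewrite IHm; ring]. Qed.

Lemma rsum_zero m : rsum m (fun _ => 0) = 0.
Proof. induction m; simpl; [ring|rewrite IHm; ring]. Qed.

Lemma rsum_le m f g : (forall e, (e < m)%nat -> f e <= g e) -> rsum m f <= rsum m g.
Proof. induction m; simpl; intros H; [lra|]. assert (f m <= g m) by auto. assert (rsum m f <= rsum m g) by auto. lra. Qed.

Lemma rsum_nonneg m f : (forall e, (e < m)%nat -> 0 <= f e) -> 0 <= rsum m f.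
Proof. intros H. rewrite <- (rsum_zero m). apply rsum_le; auto. Qed.

Lemma rsum_term_le m f k : (forall e, (e < m)%nat -> 0 <= f e) -> (k < m)%nat -> f k <= rsum m f.
Proof.
  induction m; intros H Hk; [lia|]. simpl.
  destruct (Nat.eq_dec k m).
  - subst. assert (0 <= rsum m f) by (apply rsum_nonneg; auto). lra.
  - assert (f k <= rsum m f) by (apply IHm; auto; lia). assert (0 <= f m) by auto. lra.
Qed.

Lemma rsum_swap n m (F : nat -> nat -> R) :
  rsum n (fun v => rsum m (fun e => F v e)) = rsum m (fun e => rsum n (fun v => F v e)).
Proof.
  induction n; simpl.
  - rewrite rsum_zero; auto.
  - rewrite IHn. rewrite <- rsum_plus. auto.
Qed.

Lemma rsum_indic n w g : (w < n)%nat -> rsum n (fun v => if Nat.eqb w v then g v else 0) = g w.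
Proof.
  induction n; intros Hw; [lia|]. simpl.
  destruct (Nat.eq_dec w n).
  - subst. rewrite Nat.eqb_refl.
    rewrite (rsum_ext n _ (fun _ => 0)). rewrite rsum_zero; ring.
    intros e He. destruct (Nat.eqb_spec n e); [lia|auto].
  - rewrite IHn by lia. destruct (Nat.eqb_spec w n); [lia|ring].
Qed.

Lemma rsum_deriv m (F : nat -> R -> R) (F' : nat -> R) t :
  (forall e, (e < m)%nat -> derivable_pt_lim (F e) t (F' e)) ->
  derivable_pt_lim (fun s => rsum m (fun e => F e s)) t (rsum m F').
Proof.
  induction m; intros H; simpl.
  - exact (derivable_pt_lim_const 0 t).
  - exact (derivable_pt_lim_plus (fun s => rsum m (fun e => F e s)) (F m) t _ _ (IHm (fun e He => H e ltac:(lia))) (H m ltac:(lia))).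
Qed.

Definition lsum (f : nat -> R) (es : list nat) : R := fold_right (fun e acc => f e + acc) 0 es.

Lemma lsum_deriv (es : list nat) (F : nat -> R -> R) (F' : nat -> R) t :
  (forall e, In e es -> derivable_pt_lim (F e) t (F' e)) ->
  derivable_pt_lim (fun s => lsum (fun e => F e s) es) t (lsum F' es).
Proof.
  induction es; intros H; simpl.
  - exact (derivable_pt_lim_const 0 t).
  - exact (derivable_pt_lim_plus (F a) (fun s => lsum (fun e => F e s) es) t _ _ (H a (or_introl eq_refl)) (IHes (fun e He => H e (or_intror He)))).
Qed.

Lemma lsum_ext es f g : (forall e, In e es -> f e = g e) -> lsum f es = lsum g es.
Proof. induction es; simpl; intros H; auto. rewrite IHes, H; auto. Qed.

Lemma lsum_minus es f g : lsum (fun e => f e - g e) es = lsum f es - lsum g es.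
Proof. induction es; simpl; [ring|rewrite IHes; ring]. Qed.

Lemma lsum_le es f g : (forall e, In e es -> f e <= g e) -> lsum f es <= lsum g es.
Proof. induction es; simpl; intros H; [lra|]. assert (f a <= g a) by auto. assert (lsum f es <= lsum g es) by auto. lra. Qed.

Lemma path_length_lsum L es : path_length L es = lsum L es.
Proof. reflexivity. Qed.


Definition conserv n m (tl hd : nat -> nat) s0 s1 (f : nat -> R) :=
  forall v, (v < n)%nat -> rsum m (fun e => (if Nat.eqb (tl e) v then f e else 0)
     - (if Nat.eqb (hd e) v then f e else 0)) = supply s0 s1 v.

Lemma sbp n m tl hd s0 s1 f phi : (s0 < n)%nat -> (s1 < n)%nat -> s0 <> s1 ->
  (forall e, (e < m)%nat -> (tl e < n)%nat /\ (hd e < n)%nat) ->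
  conserv n m tl hd s0 s1 f ->
  rsum m (fun e => f e * (phi (tl e) - phi (hd e))) = phi s0 - phi s1.
Proof.
  intros H0 H1 H01 Hed Hc.
  transitivity (rsum n (fun v => phi v * supply s0 s1 v)).
  - transitivity (rsum m (fun e => rsum n (fun v => phi v * ((if Nat.eqb (tl e) v then f e else 0)
         - (if Nat.eqb (hd e) v then f e else 0))))).
    + apply rsum_ext. intros e He. destruct (Hed e He) as [Ht Hh].
      rewrite (rsum_ext n _ (fun v => (if Nat.eqb (tl e) v then phi v * f e else 0) -
          (if Nat.eqb (hd e) v then phi v * f e else 0))).
      2:{ intros v _. destruct (Nat.eqb (tl e) v), (Nat.eqb (hd e) v); ring. }
      rewrite rsum_minus, !rsum_indic by auto. ring.
    + rewrite <- rsum_swap. apply rsum_ext. intros v Hv.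
      rewrite rsum_scal. rewrite Hc; auto.
  - rewrite (rsum_ext n _ (fun v => (if Nat.eqb s0 v then phi v else 0) - (if Nat.eqb s1 v then phi v else 0))).
    + rewrite rsum_minus, !rsum_indic by auto. ring.
    + intros v _. unfold supply.
      destruct (Nat.eqb_spec v s0), (Nat.eqb_spec s0 v), (Nat.eqb_spec v s1), (Nat.eqb_spec s1 v);
        subst; try lia; ring.
Qed.

Lemma kirch_conserv n m tl hd s0 s1 L Dt pt :
  (forall e, (e < m)%nat -> tl e <> hd e) ->
  (forall v, (v < n)%nat -> net_outflow m tl hd L Dt pt v = supply s0 s1 v) ->
  conserv n m tl hd s0 s1 (current tl hd L Dt pt).
Proof.
  intros Hne Hk v Hv. rewrite <- (Hk v Hv). unfold net_outflow, current.
  apply rsum_ext. intros e He.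
  destruct (Nat.eqb_spec (tl e) v), (Nat.eqb_spec (hd e) v).
  - exfalso. apply (Hne e He). congruence.
  - subst. ring.
  - subst. unfold Rdiv. ring.
  - ring.
Qed.

Lemma walk_edges m tl hd vs es : walk m tl hd vs es -> forall e, In e es -> (e < m)%nat.
Proof. induction 1; simpl; intros e0 He0; [tauto|]. destruct He0; [subst; auto | auto]. Qed.

Lemma last_default (x : nat) l d1 d2 : last (x :: l) d1 = last (x :: l) d2.
Proof. revert x. induction l; intros x; [reflexivity|]. change (last (a :: l) d1 = last (a :: l) d2). apply IHl. Qed.

Lemma walk_telescope m tl hd (phi : nat -> R) vs es : walk m tl hd vs es ->
  forall u d, hd_error vs = Some u ->
  Rabs (phi u - phi (last vs d)) <= lsum (fun e => Rabs (phi (tl e) - phi (hd e))) es.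
Proof.
  induction 1; intros u0 d Hh; simpl in Hh; inversion Hh; subst.
  - simpl. replace (phi u0 - phi u0) with 0 by ring. rewrite Rabs_R0. lra.
  - specialize (IHwalk v d eq_refl).
    change (last (u0 :: v :: vs) d) with (last (v :: vs) d).
    assert (E : Rabs (phi (tl e) - phi (hd e)) = Rabs (phi u0 - phi v)).
    { destruct H0 as [[-> ->]|[-> ->]]; auto. apply Rabs_minus_sym. }
    simpl lsum. rewrite E.
    replace (phi u0 - phi (last (v :: vs) d)) with ((phi u0 - phi v) + (phi v - phi (last (v :: vs) d))) by ring.
    pose proof (Rabs_triang (phi u0 - phi v) (phi v - phi (last (v :: vs) d))). lra.
Qed.

Lemma lsum_nonneg_walk m tl hd L vs es : walk m tl hd vs es ->
  (forall e, (e < m)%nat -> 0 < L e) -> 0 <= lsum L es.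
Proof. induction 1; simpl; intros HL; [lra|]. pose proof (HL e H). specialize (IHwalk HL). lra. Qed.

Lemma walk_suffix m tl hd (L : nat -> R) vs es : walk m tl hd vs es ->
  (forall e, (e < m)%nat -> 0 < L e) ->
  forall u, In u vs -> exists vs2 es2, walk m tl hd vs2 es2 /\ hd_error vs2 = Some u /\
    (forall d, last vs2 d = last vs d) /\ (NoDup vs -> NoDup vs2) /\ lsum L es2 <= lsum L es.
Proof.
  induction 1; intros HL u0 Hin.
  - destruct Hin as [->|[]]. exists [u0], []. split; [constructor|]. split; [auto|]. split; [auto|]. split; [auto|]. simpl; lra.
  - destruct (Nat.eq_dec u0 u) as [->|Hne].
    + exists (u :: v :: vs), (e :: es). repeat split; auto. constructor; auto. lra.
    + destruct Hin as [Heq|Hin]; [congruence|].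
      destruct (IHwalk HL u0 Hin) as (vs2 & es2 & Hw & Hh & Hl & Hn & Hle).
      exists vs2, es2. split; [auto|]. split; [auto|]. split.
      * intros d. rewrite Hl. reflexivity.
      * split.
        -- intros Hnd. apply Hn. inversion Hnd; auto.
        -- simpl. specialize (HL e H). lra.
Qed.

Lemma loop_erase m tl hd (L : nat -> R) vs es : walk m tl hd vs es ->
  (forall e, (e < m)%nat -> 0 < L e) ->
  exists vs' es', walk m tl hd vs' es' /\ NoDup vs' /\ hd_error vs' = hd_error vs /\
    (forall d, last vs' d = last vs d) /\ lsum L es' <= lsum L es.
Proof.
  induction 1; intros HL.
  - exists [v], []. split; [constructor|]. split; [constructor; [simpl; tauto|constructor]|].
    split; [auto|]. split; [auto|]. simpl; lra.
  - destruct (IHwalk HL) as (vs' & es' & Hw & Hnd & Hh & Hl & Hle).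
    assert (HLe := HL e H).
    destruct (in_dec Nat.eq_dec u vs') as [Hin|Hnin].
    + destruct (walk_suffix m tl hd L vs' es' Hw HL u Hin) as (vs2 & es2 & Hw2 & Hh2 & Hl2 & Hn2 & Hle2).
      exists vs2, es2. split; [auto|]. split; [auto|]. split; [auto|]. split.
      * intros d. rewrite Hl2, Hl. reflexivity.
      * simpl. lra.
    + destruct vs' as [|v' rest]; [inversion Hw|]. simpl in Hh. inversion Hh; subst v'.
      exists (u :: v :: rest), (e :: es'). split; [constructor; auto|].
      split; [constructor; auto|]. split; [auto|]. split.
      * intros d. change (last (v :: rest) d = last (v :: vs) d). apply Hl.
      * simpl. lra.
Qed.


Lemma Lstar_pos m tl hd L s0 s1 Ls : s0 <> s1 -> (forall e, (e < m)%nat -> 0 < L e) ->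
  shortest_path_length m tl hd L s0 s1 Ls -> 0 < Ls.
Proof.
  intros Hne HL [[vs [es [[Hw [_ [Hh Hl]]] Hlen]]] _].
  rewrite <- Hlen. rewrite path_length_lsum.
  destruct Hw as [v|u v vs0 e es0 He Hor Hw'].
  - simpl in Hh, Hl. inversion Hh. congruence.
  - simpl. rename Hw' into H1. rename He into H. pose proof (HL e H). pose proof (lsum_nonneg_walk _ _ _ L _ _ H1 HL). lra.
Qed.

Lemma exists_dist m tl hd (L : nat -> R) s0 s1 Ls :
  (forall e, (e < m)%nat -> 0 < L e) -> 0 <= Ls ->
  (forall vs es, is_path m tl hd s0 s1 vs es -> Ls <= path_length L es) ->
  exists d : nat -> R, d s1 <= 0 /\ Ls <= d s0 /\
    forall e, (e < m)%nat -> Rabs (d (tl e) - d (hd e)) <= L e.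
Proof.
  intros HL HLs Hsp.
  set (E := fun v y => y = - Ls \/ exists vs es, walk m tl hd vs es /\ hd_error vs = Some v /\
     last vs v = s1 /\ y = - lsum L es).
  assert (Hb : forall v, bound (E v)).
  { intros v. exists 0. intros y [->|(vs & es & Hw & _ & _ & ->)]; [lra|].
    pose proof (lsum_nonneg_walk _ _ _ L _ _ Hw HL). lra. }
  assert (Hn : forall v, exists y, E v y). { intros v. exists (- Ls). left; auto. }
  set (lub := fun v => proj1_sig (completeness (E v) (Hb v) (Hn v))).
  assert (Hlub : forall v, is_lub (E v) (lub v)).
  { intros v. unfold lub. destruct (completeness (E v) (Hb v) (Hn v)); auto. }
  assert (Hedge : forall e u v, (e < m)%nat -> ((tl e = u /\ hd e = v) \/ (tl e = v /\ hd e = u)) ->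
     lub v <= L e + lub u).
  { intros e u v He Hor. destruct (Hlub v) as [_ Hmin]. apply Hmin.
    destruct (Hlub u) as [Hub _].
    intros y [->|(vs & es & Hw & Hh & Hl & ->)].
    - assert (- Ls <= lub u) by (apply Hub; left; auto). pose proof (HL e He). lra.
    - destruct vs as [|v' vs0]; [inversion Hw|]. simpl in Hh. inversion Hh; subst v'.
      assert (- lsum L (e :: es) <= lub u).
      { apply Hub. right. exists (u :: v :: vs0), (e :: es). split; [constructor; auto|].
        split; [auto|]. split; [|auto].
        change (last (v :: vs0) u = s1). rewrite (last_default v vs0 u v). auto. }
      simpl in H. lra. }
  exists (fun v => - lub v). split; [|split].
  - destruct (Hlub s1) as [Hub _]. assert (- lsum L [] <= lub s1).
    { apply Hub. right. exists [s1], []. split; [constructor|]. auto. }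
    simpl in H. lra.
  - destruct (Hlub s0) as [_ Hmin]. assert (lub s0 <= - Ls); [|lra].
    apply Hmin. intros y [->|(vs & es & Hw & Hh & Hl & ->)]; [lra|].
    destruct (loop_erase _ _ _ L _ _ Hw HL) as (vs' & es' & Hw' & Hnd & Hh' & Hl' & Hle).
    assert (Ls <= path_length L es').
    { apply (Hsp vs' es'). split; [auto|]. split; [auto|]. split; [congruence|]. rewrite Hl'. auto. }
    rewrite path_length_lsum in H. lra.
  - intros e He. apply Rabs_le. split.
    + assert (lub (tl e) <= L e + lub (hd e)) by (apply (Hedge e (hd e) (tl e) He); right; auto). lra.
    + assert (lub (hd e) <= L e + lub (tl e)) by (apply (Hedge e (tl e) (hd e) He); left; auto). lra.
Qed.

Lemma flow_cost_ge n m tl hd s0 s1 (L : nat -> R) Ls f :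
  (s0 < n)%nat -> (s1 < n)%nat -> s0 <> s1 ->
  (forall e, (e < m)%nat -> (tl e < n)%nat /\ (hd e < n)%nat) ->
  (forall e, (e < m)%nat -> 0 < L e) ->
  shortest_path_length m tl hd L s0 s1 Ls ->
  conserv n m tl hd s0 s1 f -> Ls <= rsum m (fun e => L e * Rabs (f e)).
Proof.
  intros H0 H1 H01 Hed HL Hsp Hc.
  assert (HLs : 0 < Ls) by (eapply Lstar_pos; eauto).
  destruct (exists_dist m tl hd L s0 s1 Ls HL ltac:(lra) (proj2 Hsp)) as (d & Hd1 & Hd0 & Hde).
  pose proof (sbp n m tl hd s0 s1 f d H0 H1 H01 Hed Hc) as Hs.
  assert (rsum m (fun e => f e * (d (tl e) - d (hd e))) <= rsum m (fun e => L e * Rabs (f e))).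
  { apply rsum_le. intros e He. specialize (Hde e He).
    eapply Rle_trans; [apply RRle_abs|]. rewrite Rabs_mult.
    rewrite Rmult_comm. apply Rmult_le_compat_r; [apply Rabs_pos|auto]. }
  lra.
Qed.


Lemma current_eq tl hd (L x pt : nat -> R) e : 0 < L e -> 0 < x e ->
  current tl hd L x pt e = (pt (tl e) - pt (hd e)) * (x e / L e).
Proof. intros. unfold current. field. lra. Qed.

Lemma energy_id n m tl hd s0 s1 (L x pt : nat -> R) :
  (s0 < n)%nat -> (s1 < n)%nat -> s0 <> s1 ->
  (forall e, (e < m)%nat -> (tl e < n)%nat /\ (hd e < n)%nat) ->
  (forall e, (e < m)%nat -> 0 < L e) -> (forall e, (e < m)%nat -> 0 < x e) ->
  conserv n m tl hd s0 s1 (current tl hd L x pt) ->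
  pt s0 - pt s1 = rsum m (fun e => L e * (current tl hd L x pt e) ^ 2 / x e).
Proof.
  intros H0 H1 H01 Hed HL Hx Hc.
  rewrite <- (sbp n m tl hd s0 s1 _ pt H0 H1 H01 Hed Hc).
  apply rsum_ext. intros e He. rewrite current_eq by auto.
  specialize (HL e He). specialize (Hx e He). field. lra.
Qed.

Lemma q_le1 n m tl hd s0 s1 (L x pt : nat -> R) :
  (s0 < n)%nat -> (s1 < n)%nat -> s0 <> s1 ->
  (forall e, (e < m)%nat -> (tl e < n)%nat /\ (hd e < n)%nat) ->
  (forall e, (e < m)%nat -> 0 < L e) -> (forall e, (e < m)%nat -> 0 < x e) ->
  conserv n m tl hd s0 s1 (current tl hd L x pt) ->
  forall e0, (e0 < m)%nat -> Rabs (current tl hd L x pt e0) <= 1.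
Proof.
  intros H0 H1 H01 Hed HL Hx Hc e0 He0.
  set (c := Rmax (pt (tl e0)) (pt (hd e0))).
  set (phi := fun w => if Rle_dec c (pt w) then 1 else 0).
  pose proof (sbp n m tl hd s0 s1 _ phi H0 H1 H01 Hed Hc) as Hs.
  assert (Hpos : forall e, (e < m)%nat -> 0 <= current tl hd L x pt e * (phi (tl e) - phi (hd e))).
  { intros e He. rewrite current_eq by auto.
    assert (0 < x e / L e) by (apply Rdiv_lt_0_compat; auto).
    unfold phi. destruct (Rle_dec c (pt (tl e))), (Rle_dec c (pt (hd e))).
    - lra.
    - apply Rmult_le_pos; [apply Rmult_le_pos|]; lra.
    - replace ((pt (tl e) - pt (hd e)) * (x e / L e) * (0 - 1)) with
        ((pt (hd e) - pt (tl e)) * (x e / L e)) by ring.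
      apply Rmult_le_pos; lra.
    - lra. }
  assert (Hsum : rsum m (fun e => current tl hd L x pt e * (phi (tl e) - phi (hd e))) <= 1).
  { rewrite Hs. unfold phi. destruct (Rle_dec c (pt s0)), (Rle_dec c (pt s1)); lra. }
  pose proof (rsum_term_le m _ e0 Hpos He0) as Ht.
  assert (Rabs (current tl hd L x pt e0) <= current tl hd L x pt e0 * (phi (tl e0) - phi (hd e0))); [|lra].
  rewrite current_eq in * by auto.
  assert (Hk : 0 < x e0 / L e0) by (apply Rdiv_lt_0_compat; auto).
  set (dl := pt (tl e0) - pt (hd e0)). set (k := x e0 / L e0).
  unfold phi, c. unfold Rmax.
  destruct (Rle_dec (pt (tl e0)) (pt (hd e0))) as [Hle|Hle].
  - destruct (Rle_dec (pt (hd e0)) (pt (hd e0))) as [_|Hf]; [|lra].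
    destruct (Rle_dec (pt (hd e0)) (pt (tl e0))).
    + assert (dl = 0) by (unfold dl; lra). rewrite H. rewrite Rmult_0_l, Rabs_R0. lra.
    + assert (dl <= 0) by (unfold dl; lra).
      rewrite Rabs_left1.
      * lra.
      * assert (0 <= (- dl) * k) by (apply Rmult_le_pos; unfold k; lra). replace (dl * k) with (- ((- dl) * k)) by ring. lra.
  - destruct (Rle_dec (pt (tl e0)) (pt (tl e0))) as [_|Hf]; [|lra].
    destruct (Rle_dec (pt (tl e0)) (pt (hd e0))); [lra|].
    assert (dl > 0) by (unfold dl; lra).
    rewrite Rabs_pos_eq.
    * lra.
    * apply Rmult_le_pos; unfold k; lra.
Qed.

Lemma thomson n m tl hd s0 s1 (L x pt f : nat -> R) :
  (s0 < n)%nat -> (s1 < n)%nat -> s0 <> s1 ->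
  (forall e, (e < m)%nat -> (tl e < n)%nat /\ (hd e < n)%nat) ->
  (forall e, (e < m)%nat -> 0 < L e) -> (forall e, (e < m)%nat -> 0 < x e) ->
  conserv n m tl hd s0 s1 (current tl hd L x pt) ->
  conserv n m tl hd s0 s1 f ->
  pt s0 - pt s1 <= rsum m (fun e => L e * f e ^ 2 / x e).
Proof.
  intros H0 H1 H01 Hed HL Hx Hc Hf.
  pose proof (sbp n m tl hd s0 s1 _ pt H0 H1 H01 Hed Hf) as Ef.
  pose proof (sbp n m tl hd s0 s1 _ pt H0 H1 H01 Hed Hc) as Eq.
  assert (rsum m (fun e => 2 * (f e * (pt (tl e) - pt (hd e))) -
      current tl hd L x pt e * (pt (tl e) - pt (hd e))) <= rsum m (fun e => L e * f e ^ 2 / x e)).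
  { apply rsum_le. intros e He. rewrite current_eq by auto.
    specialize (HL e He). specialize (Hx e He).
    set (dl := pt (tl e) - pt (hd e)).
    assert (E : L e * f e ^ 2 / x e - (2 * (f e * dl) - dl * (x e / L e) * dl) =
      (L e * f e - x e * dl) ^ 2 * / (L e * x e)) by (field; lra).
    assert (0 <= (L e * f e - x e * dl) ^ 2 * / (L e * x e)).
    { apply Rmult_le_pos; [apply pow2_ge_0|]. left. apply Rinv_0_lt_compat. nra. }
    lra. }
  rewrite rsum_minus, rsum_scal, Ef, Eq in H. lra.
Qed.

Lemma quad_ineq n m tl hd s0 s1 (L x pt : nat -> R) lam :
  (s0 < n)%nat -> (s1 < n)%nat -> s0 <> s1 ->
  (forall e, (e < m)%nat -> (tl e < n)%nat /\ (hd e < n)%nat) ->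
  (forall e, (e < m)%nat -> 0 < L e) -> (forall e, (e < m)%nat -> 0 < x e) ->
  conserv n m tl hd s0 s1 (current tl hd L x pt) ->
  0 <= (pt s0 - pt s1) - 2 * lam * rsum m (fun e => L e * Rabs (current tl hd L x pt e))
     + lam ^ 2 * rsum m (fun e => L e * x e).
Proof.
  intros H0 H1 H01 Hed HL Hx Hc.
  rewrite (energy_id n m tl hd s0 s1 L x pt) by auto.
  rewrite <- !rsum_scal, <- rsum_minus, <- rsum_plus.
  apply rsum_nonneg. intros e He. specialize (HL e He). specialize (Hx e He).
  set (q := current tl hd L x pt e).
  replace (L e * q ^ 2 / x e - 2 * lam * (L e * Rabs q) + lam ^ 2 * (L e * x e)) with
    (L e * (Rabs q - lam * x e) ^ 2 / x e).
  - apply Rmult_le_pos; [|left; apply Rinv_0_lt_compat; auto].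
    apply Rmult_le_pos; [lra|apply pow2_ge_0].
  - rewrite <- (pow2_abs q). field. lra.
Qed.


Theorem mainTheorem6
  (n m : nat) (tl hd : nat -> nat) (s0 s1 : nat) (L : nat -> R)
  (D : nat -> R -> R) (p : nat -> R -> R)
  (Hgraph : connected_simple_graph n m tl hd s0 s1)
  (HL : forall e, (e < m)%nat -> 0 < L e)
  (HD0 : forall e, (e < m)%nat -> 0 < D e 0)
  (Hnorm : forall t, 0 <= t -> p s1 t = 0)
  (Hkirch : forall t, 0 <= t -> forall v, (v < n)%nat ->
     net_outflow m tl hd L (fun e => D e t) (fun u => p u t) v = supply s0 s1 v)
  (Hcont0 : forall e, (e < m)%nat -> forall eps, 0 < eps ->
     exists delta, 0 < delta /\
       forall t, 0 <= t < delta -> Rabs (D e t - D e 0) < eps)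
  (Hode : forall e, (e < m)%nat -> forall t, 0 < t ->
     derivable_pt_lim (D e) t
       (Rabs (current tl hd L (fun e' => D e' t) (fun u => p u t) e) - D e t))
  (Lstar : R)
  (HLstar : shortest_path_length m tl hd L s0 s1 Lstar) :
  forall eps, 0 < eps -> exists T, forall t, T <= t ->
    Rabs ((p s0 t - p s1 t) - Lstar) < eps.
Proof.
  destruct Hgraph as (Hs0 & Hs1 & H01 & Hed3 & _ & _).
  assert (Hed : forall e, (e < m)%nat -> (tl e < n)%nat /\ (hd e < n)%nat)
    by (intros e He; destruct (Hed3 e He) as (? & ? & ?); auto).
  assert (Hne : forall e, (e < m)%nat -> tl e <> hd e)
    by (intros e He; destruct (Hed3 e He) as (? & ? & ?); auto).
  set (q := fun e t => current tl hd L (fun e' => D e' t) (fun u => p u t) e).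
  assert (Hcons : forall t, 0 <= t -> conserv n m tl hd s0 s1 (fun e => q e t)).
  { intros t Ht. apply kirch_conserv; auto. }
  assert (HLs : 0 < Lstar) by (eapply Lstar_pos; eauto).
  assert (Hratio : forall e, (e < m)%nat -> forall s t, 0 < s -> s <= t ->
            exp (- (t - s)) * D e s <= D e t).
  { intros e He s t Hs Hst.
    pose proof (lin_lower (D e) (fun c => Rabs (q e c) - D e c) 1 0 s t ltac:(lra) Hst) as H.
    replace (- (t - s)) with (- (1 * (t - s))) by ring.
    replace (D e s) with (D e s - 0) by ring. replace (D e t) with (D e t - 0) by ring.
    apply H.
    - intros c Hc. apply Hode; auto; lra.
    - intros c Hc. pose proof (Rabs_pos (q e c)). lra. }
  assert (Hpos : forall e, (e < m)%nat -> forall t, 0 < t -> 0 < D e t).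
  { intros e He t Ht.
    destruct (Hcont0 e He (D e 0 / 2)) as [delta [Hdel Hd]]; [specialize (HD0 e He); lra|].
    set (t0 := Rmin t (delta / 2)).
    assert (0 < t0) by (unfold t0; apply Rmin_glb_lt; lra).
    assert (t0 <= t) by apply Rmin_l.
    assert (t0 <= delta / 2) by apply Rmin_r.
    assert (0 < D e t0).
    { specialize (Hd t0 ltac:(lra)). specialize (HD0 e He). apply Rabs_def2 in Hd. lra. }
    pose proof (Hratio e He t0 t H H0). pose proof (exp_pos (- (t - t0))).
    assert (0 < exp (- (t - t0)) * D e t0) by (apply Rmult_lt_0_compat; auto). lra. }
  assert (Hq1 : forall e, (e < m)%nat -> forall t, 0 < t -> Rabs (q e t) <= 1).
  { intros e He t Ht. unfold q.
    exact (q_le1 n m tl hd s0 s1 L (fun e' => D e' t) (fun u => p u t) Hs0 Hs1 H01 Hed HL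
      (fun e' He' => Hpos e' He' t Ht) (Hcons t ltac:(lra)) e He). }
  assert (HDup : forall e, (e < m)%nat -> forall t, 1 <= t -> D e t <= Rmax 1 (D e 1)).
  { intros e He t Ht.
    pose proof (lin_upper (D e) (fun c => Rabs (q e c) - D e c) 1 1 1 t ltac:(lra) Ht) as H.
    assert (D e t - 1 <= exp (- (1 * (t - 1))) * (D e 1 - 1)).
    { apply H.
      - intros c Hc. apply Hode; auto; lra.
      - intros c Hc. pose proof (Hq1 e He c ltac:(lra)). lra. }
    pose proof (exp_pos (- (1 * (t - 1)))).
    assert (exp (- (1 * (t - 1))) <= 1) by (rewrite <- exp_0 at 3; apply exp_le_mono; lra).
    pose proof (Rmax_l 1 (D e 1)). pose proof (Rmax_r 1 (D e 1)).
    destruct (Rle_dec (D e 1) 1).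
    + assert (exp (- (1 * (t - 1))) * (D e 1 - 1) <= 0).
      { assert (0 <= exp (- (1 * (t - 1))) * (1 - D e 1)) by (apply Rmult_le_pos; lra). lra. }
      lra.
    + assert (exp (- (1 * (t - 1))) * (D e 1 - 1) <= D e 1 - 1).
      { assert (0 <= (1 - exp (- (1 * (t - 1)))) * (D e 1 - 1)) by (apply Rmult_le_pos; lra). lra. }
      lra. }
  set (Delta := fun t => p s0 t - p s1 t).
  set (A := fun t => rsum m (fun e => L e * Rabs (q e t))).
  set (W := fun t => rsum m (fun e => L e * D e t)).
  assert (HA : forall t, 0 < t -> Lstar <= A t).
  { intros t Ht. unfold A. apply (flow_cost_ge n m tl hd s0 s1 L Lstar (fun e => q e t)); auto.
    apply Hcons; lra. }
  assert (HQ : forall t lam, 0 < t -> 0 <= Delta t - 2 * lam * A t + lam ^ 2 * W t).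
  { intros t lam Ht. unfold Delta, A, W, q.
    exact (quad_ineq n m tl hd s0 s1 L (fun e' => D e' t) (fun u => p u t) lam Hs0 Hs1 H01 Hed HL
      (fun e' He' => Hpos e' He' t Ht) (Hcons t ltac:(lra))). }
  assert (HWd : forall t, 0 < t -> derivable_pt_lim W t (A t - W t)).
  { intros t Ht. unfold W.
    replace (A t - rsum m (fun e => L e * D e t)) with
      (rsum m (fun e => L e * (Rabs (q e t) - D e t))).
    - apply (rsum_deriv m (fun e s => L e * D e s)). intros e He.
      apply dpl_scal. apply Hode; auto.
    - unfold A. rewrite <- rsum_minus. apply rsum_ext. intros; ring. }
  assert (HW1 : 0 <= W 1).
  { unfold W. apply rsum_nonneg. intros e He. pose proof (HL e He). pose proof (Hpos e He 1 ltac:(lra)).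
    nra. }
  assert (HWlow : forall t, 1 <= t -> Lstar - exp (- (t - 1)) * Lstar <= W t).
  { intros t Ht.
    pose proof (lin_lower W (fun c => A c - W c) 1 Lstar 1 t ltac:(lra) Ht) as H.
    assert (exp (- (1 * (t - 1))) * (W 1 - Lstar) <= W t - Lstar).
    { apply H.
      - intros c Hc. apply HWd; lra.
      - intros c Hc. pose proof (HA c ltac:(lra)). lra. }
    replace (- (1 * (t - 1))) with (- (t - 1)) in H0 by ring.
    pose proof (exp_pos (- (t - 1))).
    assert (0 <= exp (- (t - 1)) * W 1) by (apply Rmult_le_pos; lra). lra. }
  set (Wmax := rsum m (fun e => L e * Rmax 1 (D e 1))).
  assert (HWup : forall t, 1 <= t -> W t <= Wmax).
  { intros t Ht. unfold W, Wmax. apply rsum_le. intros e He.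
    apply Rmult_le_compat_l; [left; auto|]. apply HDup; auto. }
  assert (Hexp1 : exp (Ropp 1) < / 2).
  { rewrite exp_Ropp. apply Rinv_lt_contravar; [apply Rmult_lt_0_compat; try lra; apply exp_pos|]. pose proof (exp_ineq1 1 ltac:(lra)). lra. }
  assert (HW2 : forall t, 2 <= t -> Lstar / 2 <= W t).
  { intros t Ht. pose proof (HWlow t ltac:(lra)).
    assert (exp (- (t - 1)) <= exp (Ropp 1)) by (apply exp_le_mono; lra).
    assert (exp (- (t - 1)) * Lstar <= / 2 * Lstar) by (apply Rmult_le_compat_r; lra). lra. }
  assert (HDratio : forall s t, 0 < s -> s <= t -> Delta t <= exp (t - s) * Delta s).
  { intros s t Hs Hst.
    pose proof (thomson n m tl hd s0 s1 L (fun e' => D e' t) (fun u => p u t) (fun e => q e s)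
      Hs0 Hs1 H01 Hed HL (fun e' He' => Hpos e' He' t ltac:(lra)) (Hcons t ltac:(lra)) (Hcons s ltac:(lra))) as H1.
    pose proof (energy_id n m tl hd s0 s1 L (fun e' => D e' s) (fun u => p u s)
      Hs0 Hs1 H01 Hed HL (fun e' He' => Hpos e' He' s Hs) (Hcons s ltac:(lra))) as H2.
    cbv beta in H1, H2. unfold Delta. rewrite H2. rewrite <- rsum_scal.
    eapply Rle_trans; [exact H1|]. apply rsum_le. intros e He.
    pose proof (Hratio e He s t Hs Hst). pose proof (Hpos e He s Hs). pose proof (Hpos e He t ltac:(lra)).
    pose proof (exp_pos (- (t - s))).
    assert (Hinv : / D e t <= exp (t - s) * / D e s).
    { assert (Hi : / D e t <= / (exp (- (t - s)) * D e s)).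
      { apply Rinv_le_contravar; [apply Rmult_lt_0_compat; auto | exact H]. }
      rewrite Rinv_mult, exp_Ropp, Rinv_inv in Hi. exact Hi. }
    assert (0 <= L e * q e s ^ 2) by (apply Rmult_le_pos; [left; auto|apply pow2_ge_0]).
    unfold Rdiv. fold (q e s).
    replace (exp (t - s) * (L e * q e s ^ 2 * / D e s)) with (L e * q e s ^ 2 * (exp (t - s) * / D e s)) by ring.
    apply Rmult_le_compat_l; auto. }
  pose proof HLstar as [[vs [es [[Hw [_ [Hhd Hlast]]] Hlen]]] _].
  assert (Hes : forall e, In e es -> (e < m)%nat) by (apply (walk_edges m tl hd vs es Hw)).
  set (Psi := fun t => lsum (fun e => L e * ln (D e t)) es - Lstar * ln (W t)).
  set (Psi' := fun t => lsum (fun e => L e * (/ D e t * (Rabs (q e t) - D e t))) es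
                        - Lstar * (/ W t * (A t - W t))).
  assert (HPsid : forall t, 2 <= t -> derivable_pt_lim Psi t (Psi' t)).
  { intros t Ht. unfold Psi, Psi'.
    apply (dpl_minus (fun s => lsum (fun e => L e * ln (D e s)) es) (fun s => Lstar * ln (W s))).
    - apply (lsum_deriv es (fun e s => L e * ln (D e s))). intros e He.
      apply dpl_scal. apply dpl_ln; [apply Hode|apply Hpos]; auto; lra.
    - apply dpl_scal. apply dpl_ln; [apply HWd; lra|]. pose proof (HW2 t Ht). lra. }
  assert (HPsi'1 : forall t, 2 <= t -> Delta t - Lstar * (Lstar / W t) * A t / Lstar <= Psi' t).
  { intros t Ht. pose proof (HW2 t Ht) as HWt.
    assert (E1 : lsum (fun e => L e * (/ D e t * (Rabs (q e t) - D e t))) es =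
                 lsum (fun e => Rabs (p (tl e) t - p (hd e) t)) es - Lstar).
    { rewrite <- Hlen. change (path_length L es) with (lsum L es). rewrite <- lsum_minus. apply lsum_ext. intros e He.
      pose proof (Hes e He) as Hm. pose proof (HL e Hm). pose proof (Hpos e Hm t ltac:(lra)).
      unfold q. rewrite current_eq by auto. rewrite Rabs_mult.
      rewrite (Rabs_pos_eq (D e t / L e)) by (left; apply Rdiv_lt_0_compat; auto).
      field. lra. }
    pose proof (walk_telescope m tl hd (fun u => p u t) vs es Hw s0 s0 Hhd) as Ht2.
    cbv beta in Ht2. rewrite Hlast in Ht2.
    pose proof (RRle_abs (p s0 t - p s1 t)).
    unfold Psi'. rewrite E1. unfold Delta.
    replace (Lstar * (Lstar / W t) * A t / Lstar) with (Lstar * (/ W t * A t)) by (field; lra).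
    replace (Lstar * (/ W t * (A t - W t))) with (Lstar * (/ W t * A t) - Lstar) by (field; lra).
    lra. }
  assert (HPsi' : forall t, 2 <= t -> 0 <= Psi' t /\ (Delta t - Lstar * (Lstar / W t)) / 2 <= Psi' t
                    /\ Lstar * (Lstar / W t) <= Delta t).
  { intros t Ht. pose proof (HW2 t Ht) as HWt. pose proof (HPsi'1 t Ht).
    set (u := Lstar / W t) in *.
    assert (Hu : 0 < u) by (unfold u; apply Rdiv_lt_0_compat; lra).
    pose proof (HQ t u ltac:(lra)).
    assert (Huw : u ^ 2 * W t = u * Lstar) by (unfold u; field; lra).
    replace (Lstar * u * A t / Lstar) with (u * A t) in H by (field; lra).
    pose proof (HA t ltac:(lra)).
    assert (u * Lstar <= u * A t) by (apply Rmult_le_compat_l; lra).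
    rewrite (Rmult_comm Lstar u). lra. }
  assert (HPsimono : forall s t, 2 <= s -> s <= t -> Psi s <= Psi t).
  { intros s t Hs Hst. apply (mono_deriv Psi Psi'); auto.
    - intros c Hc. apply HPsid. lra.
    - intros c Hc. apply HPsi'. lra. }
  set (CPsi := lsum (fun e => L e * ln (Rmax 1 (D e 1))) es - Lstar * ln (Lstar / 2)).
  assert (HPsib : forall t, 2 <= t -> Psi t <= CPsi).
  { intros t Ht. unfold Psi, CPsi.
    assert (lsum (fun e => L e * ln (D e t)) es <= lsum (fun e => L e * ln (Rmax 1 (D e 1))) es).
    { apply lsum_le. intros e He. pose proof (Hes e He) as Hm.
      apply Rmult_le_compat_l; [left; auto|]. apply ln_le_mono; [apply Hpos; auto; lra|].
      apply HDup; auto; lra. }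
    assert (ln (Lstar / 2) <= ln (W t)) by (apply ln_le_mono; [lra|apply HW2; auto]).
    assert (Lstar * ln (Lstar / 2) <= Lstar * ln (W t)) by (apply Rmult_le_compat_l; lra).
    lra. }
  intros eps Heps.
  set (ep := eps / 4).
  assert (Hep : 0 < ep) by (unfold ep; lra).
  assert (HU : exists T1, 2 <= T1 /\ forall t, T1 <= t -> Delta t < Lstar + ep).
  { set (h := ep / (4 * (Lstar + ep))).
    assert (Hh : 0 < h) by (unfold h; apply Rdiv_lt_0_compat; lra).
    assert (Hh4 : h * (Lstar + ep) = ep / 4) by (unfold h; field; lra).
    set (r := (ep / 4) / (Lstar + ep / 4)).
    assert (Hr : 0 < r) by (unfold r; apply Rdiv_lt_0_compat; lra).
    assert (Hr1 : (Lstar + ep / 4) * (1 - r) = Lstar) by (unfold r; field; lra).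
    destruct (small_exp r Hr) as [Ta Hta].
    destruct (mono_bounded_cauchy Psi 2 CPsi HPsimono HPsib (h * ep / 4)) as [Tb [HTb HTbc]].
    { apply Rmult_lt_0_compat; [apply Rmult_lt_0_compat|]; lra. }
    set (T0 := Rmax (Rmax 2 (Ta + 1)) Tb).
    assert (HT0a : 2 <= T0) by (unfold T0; eapply Rle_trans; [apply Rmax_l|apply Rmax_l]).
    assert (HT0b : Ta + 1 <= T0) by (unfold T0; eapply Rle_trans; [apply Rmax_r|apply Rmax_l]).
    assert (HT0c : Tb <= T0) by (unfold T0; apply Rmax_r).
    assert (HWs : forall c, T0 <= c -> Lstar * (Lstar / W c) <= Lstar + ep / 4).
    { intros c Hc. pose proof (HWlow c ltac:(lra)). pose proof (HW2 c ltac:(lra)).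
      assert (exp (- (c - 1)) <= r) by (apply Hta; lra).
      assert (exp (- (c - 1)) * Lstar <= r * Lstar) by (apply Rmult_le_compat_r; lra).
      assert (Lstar * (1 - r) <= W c) by lra.
      assert (Lstar * Lstar <= (Lstar + ep / 4) * W c).
      { rewrite <- Hr1 at 1. replace ((Lstar + ep / 4) * (1 - r) * Lstar) with
          ((Lstar + ep / 4) * (Lstar * (1 - r))) by ring.
        apply Rmult_le_compat_l; lra. }
      replace (Lstar * (Lstar / W c)) with ((Lstar * Lstar) * / W c) by (field; lra).
      replace (Lstar + ep / 4) with (((Lstar + ep / 4) * W c) * / W c) by (field; lra).
      apply Rmult_le_compat_r; [left; apply Rinv_0_lt_compat; lra|auto]. }
    exists (T0 + h). split; [lra|]. intros t0 Ht0.
    destruct (Rlt_dec (Delta t0) (Lstar + ep)) as [Hlt|Hge]; auto.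
    exfalso. apply Rnot_lt_le in Hge.
    assert (Hc : forall c, t0 - h <= c <= t0 -> ep / 4 <= Psi' c).
    { intros c Hc. pose proof (HDratio c t0 ltac:(lra) ltac:(lra)) as Hr0.
      assert (Hex : exp (- (t0 - c)) * exp (t0 - c) = 1) by (rewrite <- exp_plus; replace (- (t0 - c) + (t0 - c)) with 0 by ring; apply exp_0).
      pose proof (exp_pos (- (t0 - c))).
      assert (exp (- (t0 - c)) * Delta t0 <= Delta c).
      { apply Rmult_le_compat_l with (r := exp (- (t0 - c))) in Hr0; [|lra].
        rewrite <- Rmult_assoc, Hex, Rmult_1_l in Hr0. exact Hr0. }
      assert (1 - h <= exp (- (t0 - c))).
      { assert (exp (- h) <= exp (- (t0 - c))) by (apply exp_le_mono; lra).
        pose proof (exp_ineq1 (- h) ltac:(lra)). lra. }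
      assert ((1 - h) * (Lstar + ep) <= exp (- (t0 - c)) * Delta t0).
      { assert (Hh1 : h < 1) by nra. apply Rmult_le_compat; lra. }
      pose proof (HPsi' c ltac:(lra)) as [_ [Hp2 _]].
      pose proof (HWs c ltac:(lra)). lra. }
    set (g := fun c => Psi c - ep / 4 * c).
    assert (g (t0 - h) <= g t0).
    { apply (mono_deriv g (fun c => Psi' c - ep / 4 * 1)); [lra| |].
      - intros c Hc0. unfold g. apply (dpl_minus Psi (fun c => ep / 4 * c)).
        + apply HPsid. lra.
        + apply dpl_scal. apply dpl_id.
      - intros c Hc0. pose proof (Hc c Hc0). lra. }
    unfold g in H. pose proof (HTbc (t0 - h) t0 ltac:(lra) ltac:(lra)). lra. }
  destruct HU as [T1 [HT1 HU]].
  assert (HWm : 0 < Wmax) by (pose proof (HW2 T1 HT1); pose proof (HWup T1 ltac:(lra)); lra).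
  destruct (small_exp (ep / Wmax) ltac:(apply Rdiv_lt_0_compat; lra)) as [Tc Htc].
  exists (T1 + 2 * Rabs Tc). intros t Ht.
  pose proof (Rle_abs Tc). pose proof (Rabs_pos Tc).
  assert (HWt : W t - (Lstar + ep) <= exp (- (/ 2 * (t - T1))) * (W T1 - (Lstar + ep))).
  { apply (lin_upper W (fun c => A c - W c)); [apply Rinv_0_lt_compat; lra|lra| |].
    - intros c Hc. apply HWd. lra.
    - intros c Hc. pose proof (HQ c 1 ltac:(lra)) as HQ1. rewrite pow1, Rmult_1_r, Rmult_1_l in HQ1. pose proof (HU c ltac:(lra)). lra. }
  assert (exp (- (/ 2 * (t - T1))) <= ep / Wmax) by (apply Htc; lra).
  pose proof (exp_pos (- (/ 2 * (t - T1)))).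
  pose proof (HWup T1 ltac:(lra)).
  assert (exp (- (/ 2 * (t - T1))) * (W T1 - (Lstar + ep)) <= exp (- (/ 2 * (t - T1))) * Wmax)
    by (apply Rmult_le_compat_l; lra).
  assert (exp (- (/ 2 * (t - T1))) * Wmax <= ep / Wmax * Wmax) by (apply Rmult_le_compat_r; lra).
  assert (ep / Wmax * Wmax = ep) by (field; lra).
  assert (HWt2 : W t <= Lstar + 2 * ep) by lra.
  assert (HWt0 : 0 < W t) by (pose proof (HW2 t ltac:(lra)); lra).
  pose proof (HPsi' t ltac:(lra)) as [_ [_ Hlow]].
  pose proof (HU t ltac:(lra)) as Hup.
  assert (Lstar - 2 * ep <= Lstar * (Lstar / W t)).
  { replace (Lstar * (Lstar / W t)) with ((Lstar * Lstar) * / W t) by (field; lra).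
    replace (Lstar - 2 * ep) with (((Lstar - 2 * ep) * W t) * / W t) by (field; lra).
    apply Rmult_le_compat_r; [left; apply Rinv_0_lt_compat; lra|].
    destruct (Rle_dec 0 (Lstar - 2 * ep)).
    - assert ((Lstar - 2 * ep) * W t <= (Lstar - 2 * ep) * (Lstar + 2 * ep)) by (apply Rmult_le_compat_l; lra).
      nra.
    - assert (0 <= (2 * ep - Lstar) * W t) by (apply Rmult_le_pos; lra). nra. }
  unfold Delta in Hlow, Hup. apply Rabs_def1.
  all: unfold ep in *; lra.
Qed.
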